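(* Let $R$ be a ring with identity and involution $*$, and let $a,b\in R$ with $a$ group invertible. The following are equivalent: (1) $a$ is core invertible with core inverse $b$; (2) $aba=a$, $ab^2=b$, $(ab)^*=ab$; (3) $bab=b$, $ba^2=a$, $(ab)^*=ab$.
   Context: An involution on $R$ satisfies $(a^* )^*=a$, $(ab)^*=b^*a^*$, $(a+b)^*=a^*+b^*$. An element $x\in R$ is a core inverse of $a$ if $axa=a$, $xR=aR$ and $Rx=Ra^*$; it is unique when it exists. $a$ is group invertible if there is $c\in R$ with $aca=a$, $cac=c$, $ac=ca$. *)

(* Defs.v *)
From HB Require Import structures.
From mathcomp Require Import all_boot all_algebra.
Set Implicit Arguments. Unset Strict Implicit. Unset Printing Implicit Defensive.
Import GRing.Theory.
Local Open Scope ring_scope.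

Definition involution (R : pzRingType) (star : R -> R) : Prop :=
  [/\ forall a, star (star a) = a,
      forall a b, star (a * b) = star b * star a
    & forall a b, star (a + b) = star a + star b].

Definition same_right_ideal (R : pzRingType) (x y : R) : Prop :=
  forall z : R, (exists r, z = x * r) <-> (exists r, z = y * r).

Definition same_left_ideal (R : pzRingType) (x y : R) : Prop :=
  forall z : R, (exists r, z = r * x) <-> (exists r, z = r * y).

Definition core_inverse (R : pzRingType) (star : R -> R) (a x : R) : Prop :=
  [/\ a * x * a = a, same_right_ideal x a & same_left_ideal x (star a)].

Definition group_invertible (R : pzRingType) (a : R) : Prop :=
  exists c : R, [/\ a * c * a = a, c * a * c = c & a * c = c * a].

(* Main.v *)
Require Import Defs.
From mathcomp Require Import all_boot all_algebra.
Import GRing.Theory.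
Local Open Scope ring_scope.

Theorem corollary3p7 (R : pzRingType) (star : R -> R) (a b : R) :
  involution star -> group_invertible a ->
  [/\ (core_inverse star a b ->
         [/\ a * b * a = a, a * b ^+ 2 = b & star (a * b) = a * b]),
      ([/\ a * b * a = a, a * b ^+ 2 = b & star (a * b) = a * b] ->
         [/\ b * a * b = b, b * a ^+ 2 = a & star (a * b) = a * b])
    & ([/\ b * a * b = b, b * a ^+ 2 = a & star (a * b) = a * b] ->
         core_inverse star a b)].
Proof.
move=> [sK sM sD] [c [h1 h2 h3]].
have ea : a ^+ 2 = a * a := expr2 a.
have eb : b ^+ 2 = b * b := expr2 b.
split.
- move=> [aba hR hL].
  have [r br] : exists r, b = a * r by apply/hR; exists 1; rewrite mulr1.
  have [t bt] : exists t, b = t * star a by apply/hL; exists 1; rewrite mul1r.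
  have e1 : b = b * star (a * b).
    by rewrite {1}bt -{1}aba sM sM mulrA -bt -sM.
  have e2 : a * b = a * b * star (a * b) by rewrite {1}e1 mulrA.
  have sab : star (a * b) = a * b.
    by rewrite e2 sM sK.
  split => //.
  have -> : b ^+ 2 = b * b by []. by rewrite {2}br !mulrA aba -br.
- move=> [aba abb sab].
  have acb : a * c * b = b by rewrite -abb eb !mulrA h1.
  have baa : b * a ^+ 2 = a.
    rewrite ea -{1}acb h3 -!mulrA (mulrA b a a) (mulrA a (b * a)) (mulrA a b a) aba.
    by rewrite mulrA -h3 h1.
  split => //.
  by rewrite -{2}acb !mulrA -(mulrA b a a) -ea baa acb.
- move=> [bab baa sab].
  have aac : a * a * c = a by rewrite -mulrA h3 mulrA h1.
  have ba : b * a = a * c by rewrite -{1}aac !mulrA -(mulrA b a a) -ea baa.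
  have aba : a * b * a = a by rewrite -mulrA ba mulrA aac.
  split => //.
  + move=> z; split=> -[r ->].
    * exists (c * b * r). by rewrite !mulrA -ba bab.
    * exists (a * a * r). rewrite !mulrA -(mulrA b a a) -ea baa. done.
  + move=> z; split=> -[r ->].
    * exists (r * b * star b). by rewrite -!mulrA -sM sab (mulrA b a b) bab.
    * exists (r * star a * a). by rewrite -!mulrA -sab -sM aba.
Qed.
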